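(* Let $\mathcal{C}=\mathrm{CSS}(C_X,C_Z)$ be an $[[n,k,d]]_2$ CSS code with $C_X=\ker H_X$, $C_Z=\ker H_Z$, of positive dimension $k>0$, which exhibits $(c_1,c_2,\epsilon_0)$-clustering for some constants $c_1,c_2,\epsilon_0>0$. Let $$\epsilon<\frac{1}{1000}\cdot\min\left\{\frac{\epsilon_0}{2},\ \frac{c_2}{4c_1},\ \frac{d}{2c_1 n}\right\},$$ and let $\rho$ be any (possibly mixed) $n$-qubit state with $\mathrm{Tr}(\mathbf{H}\rho)\le\epsilon$, where $\mathbf{H}$ is the code Hamiltonian of $\mathcal{C}$. Then at least one of the distributions $D_X^\rho$, $D_Z^\rho$ is $(\mu,\delta)$-spread with $\mu=0.02$ and $\delta=c_2$.
   Context: All vectors are over $\mathbb{F}_2$. For $y\in\mathbb{F}_2^n$, $|y|$ is the Hamming weight; for a linear code $C$, $|y|_C=\min_{y'\in C}|y+y'|$; for sets $S,T$, $\mathrm{dis}(S,T)=\min_{s\in S,t\in T}|s-t|$. A CSS code $\mathcal{C}=\mathrm{CSS}(C_X,C_Z)$ is given by parity-check matrices $H_X\in\mathbb{F}_2^{m_X\times n}$, $H_Z\in\mathbb{F}_2^{m_Z\times n}$ with $C_X=\ker H_X$, $C_Z=\ker H_Z$, $C_X^\perp\subseteq C_Z$; the code space is $\mathrm{span}\{|y+C_X^\perp\rangle : y\in C_Z\}$ where $|S\rangle$ is the uniform superposition over $S$; dimension $k=\dim C_Z-\dim C_X^\perp$, distance $d=\min\{|y|: y\in (C_Z\setminus C_X^\perp)\cup(C_X\setminus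 C_Z^\perp)\}$. Code Hamiltonian: $\mathbf{H}=\frac12(\mathbf{H}_X+\mathbf{H}_Z)$ with $\mathbf{H}_X=\frac{1}{m_X}\sum_{y\in\mathrm{rows}(H_X)}\frac{I-X^y}{2}$, $\mathbf{H}_Z=\frac{1}{m_Z}\sum_{y\in\mathrm{rows}(H_Z)}\frac{I-Z^y}{2}$ ($X^y,Z^y$ are tensor products of Pauli operators on the support of $y$). Let $G_X^\epsilon=\{y\in\mathbb{F}_2^n:|H_Xy|\le\epsilon m_X\}$ and $G_Z^\epsilon=\{y\in\mathbb{F}_2^n:|H_Zy|\le\epsilon m_Z\}$. $\mathcal{C}$ exhibits $(c_1,c_2,\epsilon_0)$-clustering if for all $0<\epsilon<\epsilon_0$: every $y\in G_X^\epsilon$ has $|y|_{C_Z^\perp}\le c_1\epsilon n$ or $|y|_{C_Z^\perp}\ge c_2 n$, and every $y\in G_Z^\epsilon$ has $|y|_{C_X^\perp}\le c_1\epsilon n$ or $|y|_{C_X^\perp}\ge c_2 n$. For an $n$-qubit state $\rho$, $D_X^\rho$ and $D_Z^\rho$ denote the distributions on $\mathbb{F}_2^n$ obtained by measuring all qubits of $\rho$ in the $X$, resp. $Z$, basis. A distribution $D$ on $\mathbb{F}_2^n$ is $(\mu,\delta)$-spread if there are $S_0,S_1\subseteq\mathbb{F}_2^n$ with $D(S_0)\ge\mu$, $D(S_1)\ge\mu$ and $\mathrm{dis}(S_0,S_1)\ge\delta n$. *)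

(* Defs.v *)
From HB Require Import structures.
From mathcomp Require Import all_boot all_order all_algebra.
From mathcomp Require Import complex.
From mathcomp Require Import reals.
Set Implicit Arguments. Unset Strict Implicit. Unset Printing Implicit Defensive.
Import Order.TTheory GRing.Theory Num.Theory.
Local Open Scope ring_scope.

Notation vec n := 'rV['F_2]_n.

Definition wt m (y : vec m) : nat := #|[set i : 'I_m | y 0 i != 0]|.

Definition dotF2 n (x y : vec n) : 'F_2 := (x *m y^T) 0 0.

(* C = ker H, with H y computed as y *m H^T *)
Definition kerC m n (H : 'M['F_2]_(m, n)) : {set vec n} :=
  [set y : vec n | y *m H^T == 0].

Definition dual n (C : {set vec n}) : {set vec n} :=
  [set y : vec n | [forall c in C, dotF2 y c == 0]].

Definition dimF2 n (C : {set vec n}) : nat :=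
  \rank (\matrix_(i < #|C|) nth 0 (enum C) i).

(* |y|_C = min_{y' in C} |y + y'|  (C nonempty in all uses) *)
Definition cwt n (C : {set vec n}) (y : vec n) : nat :=
  \big[minn/n]_(y' in C) wt (y + y').

Definition dis n (S T : {set vec n}) : nat :=
  \big[minn/n]_(s in S) \big[minn/n]_(t in T) wt (s - t).

Definition css_cond mX mZ n (HX : 'M['F_2]_(mX, n)) (HZ : 'M['F_2]_(mZ, n)) :=
  dual (kerC HX) \subset kerC HZ.

Definition css_k mX mZ n (HX : 'M['F_2]_(mX, n)) (HZ : 'M['F_2]_(mZ, n)) : nat :=
  (dimF2 (kerC HZ) - dimF2 (dual (kerC HX)))%N.

Definition css_d mX mZ n (HX : 'M['F_2]_(mX, n)) (HZ : 'M['F_2]_(mZ, n)) : nat :=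
  \big[minn/n]_(y in (kerC HZ :\: dual (kerC HX)) :|: (kerC HX :\: dual (kerC HZ)))
     wt y.

Definition Geps (R : realType) m n (H : 'M['F_2]_(m, n)) (e : R) : {set vec n} :=
  [set y : vec n | ((wt (y *m H^T))%:R <= e * m%:R)%R].

Definition clustering (R : realType) mX mZ n
    (HX : 'M['F_2]_(mX, n)) (HZ : 'M['F_2]_(mZ, n)) (c1 c2 e0 : R) : Prop :=
  forall e : R, 0 < e -> e < e0 ->
    (forall y, y \in Geps HX e ->
       ((cwt (dual (kerC HZ)) y)%:R <= c1 * e * n%:R
        \/ c2 * n%:R <= (cwt (dual (kerC HZ)) y)%:R)) /\
    (forall y, y \in Geps HZ e ->
       ((cwt (dual (kerC HX)) y)%:R <= c1 * e * n%:R
        \/ c2 * n%:R <= (cwt (dual (kerC HX)) y)%:R)).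

(* |x>, x in F_2^n; an operator A is its matrix (x, x') |-> <x|A|x'>.   *)

Definition op (R : realType) n := vec n -> vec n -> R[i].

Definition idop (R : realType) n : op R n := fun x x' => (x == x')%:R.

Definition mulop (R : realType) n (A B : op R n) : op R n :=
  fun x z => \sum_y A x y * B y z.

Definition trop (R : realType) n (A : op R n) : R[i] := \sum_x A x x.

Definition signF2 (R : realType) (b : 'F_2) : R[i] := if b == 0 then 1 else -1.

(* X^y |x'> = |x' + y>  ;  Z^y |x'> = (-1)^{y.x'} |x'> *)
Definition Xop (R : realType) n (y : vec n) : op R n :=
  fun x x' => (x == x' + y)%:R.
Definition Zop (R : realType) n (y : vec n) : op R n :=
  fun x x' => (x == x')%:R * signF2 R (dotF2 y x').

Definition HamX (R : realType) mX n (HX : 'M['F_2]_(mX, n)) : op R n :=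
  fun x x' => (mX%:R)^-1 * \sum_(i < mX) ((idop R x x' - Xop R (row i HX) x x') / 2%:R).
Definition HamZ (R : realType) mZ n (HZ : 'M['F_2]_(mZ, n)) : op R n :=
  fun x x' => (mZ%:R)^-1 * \sum_(i < mZ) ((idop R x x' - Zop R (row i HZ) x x') / 2%:R).

Definition code_ham (R : realType) mX mZ n
    (HX : 'M['F_2]_(mX, n)) (HZ : 'M['F_2]_(mZ, n)) : op R n :=
  fun x x' => (HamX R HX x x' + HamZ R HZ x x') / 2%:R.

Definition is_state (R : realType) n (rho : op R n) : Prop :=
  (forall v : vec n -> R[i], 0 <= \sum_x \sum_x' (v x)^* * rho x x' * v x')
  /\ trop rho = 1.

(* X-basis vector |y^> = H^{(x)n}|y>, components <x|y^> = (-1)^{x.y}/sqrt(2^n) *)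
Definition xket (R : realType) n (y : vec n) : vec n -> R[i] :=
  fun x => signF2 R (dotF2 x y) / sqrtC (2%:R ^+ n).

Definition DZ (R : realType) n (rho : op R n) : vec n -> R[i] := fun y => rho y y.
Definition DX (R : realType) n (rho : op R n) : vec n -> R[i] :=
  fun y => \sum_x \sum_x' (xket R y x)^* * rho x x' * xket R y x'.

Definition prob (R : realType) n (D : vec n -> R[i]) (S : {set vec n}) : R[i] :=
  \sum_(y in S) D y.

Definition spread (R : realType) n (D : vec n -> R[i]) (mu delta : R) : Prop :=
  exists S0 S1 : {set vec n},
    (mu%:C)%C <= prob D S0 /\ (mu%:C)%C <= prob D S1 /\ delta * n%:R <= (dis S0 S1)%:R.

(* Main.v *)
Require Import Defs.
From HB Require Import structures.
From mathcomp Require Import all_boot all_order all_algebra.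
From mathcomp Require Import complex.
From mathcomp Require Import reals.
From mathcomp Require Import ring lra zify.
From Stdlib Require Import Classical_Prop.
Import Order.TTheory GRing.Theory Num.Theory.
Local Open Scope ring_scope.
Set Implicit Arguments. Unset Strict Implicit. Unset Printing Implicit Defensive.

Lemma F2_cases (x : 'F_2) : x = 0 \/ x = 1.
Proof. case: x => -[|[|m]] Hm; [left|right|]; try exact/val_inj. by []. Qed.
Lemma F2_add11 : (1 + 1 : 'F_2) = 0. Proof. exact/val_inj. Qed.
Lemma F2_10 : (1 : 'F_2) != 0. Proof. by []. Qed.
Lemma F2_opp (x : 'F_2) : - x = x.
Proof. by case: (F2_cases x) => ->; [rewrite oppr0 | apply/val_inj]. Qed.
Lemma vec_opp n (y : vec n) : - y = y.
Proof. by apply/matrixP => i j; rewrite !mxE F2_opp. Qed.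
Lemma vec_sub n (a b : vec n) : a - b = a + b.
Proof. by rewrite vec_opp. Qed.
Lemma vec_addK n (a : vec n) : a + a = 0.
Proof. by rewrite -{2}(vec_opp a) subrr. Qed.

Lemma card_vec n : #|{: vec n}| = (2 ^ n)%N.
Proof. by rewrite card_mx card_Fp // mul1n. Qed.

Section Sign.
Variable R : realType.
Definition sR (b : 'F_2) : R := if b == 0 then 1 else -1.
Lemma sR0 : sR 0 = 1. Proof. by rewrite /sR eqxx. Qed.
Lemma sR1 : sR 1 = -1. Proof. by []. Qed.
Lemma sRD a b : sR (a + b) = sR a * sR b.
Proof.
case: (F2_cases a) => ->; case: (F2_cases b) => ->;
  rewrite ?add0r ?addr0 ?sR0 ?sR1 ?mul1r ?mulr1 //.
by rewrite F2_add11 sR0 mulrNN mulr1.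
Qed.
Lemma sR_sq a : sR a * sR a = 1.
Proof. by rewrite -sRD -{1}(F2_opp a) addNr sR0. Qed.
Lemma sR_01 a : (1 - sR a) / 2%:R = (a != 0)%:R.
Proof.
case: (F2_cases a) => ->; rewrite ?sR0 ?sR1 ?subrr ?mul0r ?eqxx //.
by rewrite opprK -mulr2n divff // pnatr_eq0.
Qed.
Lemma sR_bound a : -1 <= sR a <= 1.
Proof. case: (F2_cases a) => ->; rewrite ?sR0 ?sR1 ?lexx; apply/andP; split => //; lra. Qed.
Lemma signF2E a : signF2 R a = (sR a)%:C%C.
Proof. by rewrite /signF2 /sR; case: (a == 0); [rewrite rmorph1 | rewrite rmorphN1]. Qed.
End Sign.

Section Dot.
Variable n : nat.
Implicit Types x y z a : vec n.
Lemma dotC x y : dotF2 x y = dotF2 y x.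
Proof. by rewrite /dotF2 -{1}(trmxK x) -trmx_mul mxE. Qed.
Lemma dotDl x y z : dotF2 (x + y) z = dotF2 x z + dotF2 y z.
Proof. by rewrite /dotF2 mulmxDl mxE. Qed.
Lemma dotDr x y z : dotF2 z (x + y) = dotF2 z x + dotF2 z y.
Proof. by rewrite dotC dotDl !(dotC z). Qed.
Lemma dot0l x : dotF2 0 x = 0.
Proof. by rewrite /dotF2 mul0mx mxE. Qed.
Lemma dot0r x : dotF2 x 0 = 0.
Proof. by rewrite dotC dot0l. Qed.
Lemma dotE x y : dotF2 x y = \sum_j x 0 j * y 0 j.
Proof. by rewrite /dotF2 mxE; apply: eq_bigr => j _; rewrite mxE. Qed.
Lemma dot_delta (j : 'I_n) x : dotF2 (delta_mx 0 j) x = x 0 j.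
Proof.
rewrite dotE (bigD1 j) //= big1 ?addr0 ?mxE ?eqxx ?mul1r //.
by move=> i /negbTE Hi; rewrite mxE Hi andbF mul0r.
Qed.
Lemma synD m (H : 'M['F_2]_(m, n)) x y : (x + y) *m H^T = x *m H^T + y *m H^T.
Proof. by rewrite mulmxDl. Qed.
Lemma syn_dot m (H : 'M['F_2]_(m, n)) x i : (x *m H^T) 0 i = dotF2 (row i H) x.
Proof.
rewrite mxE dotE; apply: eq_bigr => j _; rewrite !mxE mulrC //.
Qed.
End Dot.

Section Orth.
Variable R : realType.
Variable n : nat.
Lemma orth (a : vec n) :
  \sum_(s : vec n) sR R (dotF2 s a) = (a == 0)%:R * (2 ^ n)%:R.
Proof.
have [->|Ha] := eqVneq a 0.
  rewrite mul1r (eq_bigr (fun _ => 1)) => [|s _]; last by rewrite dot0r sR0.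
  by rewrite sumr_const card_vec.
rewrite mul0r.
have [j Hj] : exists j, a 0 j != 0.
  apply/existsP; apply: contraR Ha => /existsPn H; apply/eqP/matrixP => i k.
  by rewrite ord1 mxE; apply/eqP; move: (H k); rewrite negbK.
have Haj : a 0 j = 1 by case: (F2_cases (a 0 j)) Hj => ->; rewrite ?eqxx.
set S := \sum_s _.
have : S = - S.
  rewrite {1}/S (reindex_inj (addrI (delta_mx 0 j))) /= -sumrN.
  apply: eq_bigr => s _; rewrite dotDl dot_delta Haj sRD sR1.
  by rewrite mulN1r.
move/eqP; rewrite -subr_eq0 opprK -mulr2n mulrn_eq0 /= => /eqP //.
Qed.
End Orth.

Section Wt.
Variable n : nat.
Implicit Types x y a b : vec n.
Lemma wt_le_n y : (wt y <= n)%N.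
Proof. by rewrite /wt; apply: leq_trans (max_card _) _; rewrite card_ord. Qed.
Lemma wtD a b : (wt (a + b) <= wt a + wt b)%N.
Proof.
rewrite /wt; apply: leq_trans (leq_card_setU _ _).
apply: subset_leq_card; apply/subsetP => i; rewrite !inE mxE.
by apply: contraR; rewrite negb_or !negbK => /andP [/eqP -> /eqP ->]; rewrite addr0.
Qed.
Lemma wt0 : wt (0 : vec n) = 0%N.
Proof. by rewrite /wt; apply/eqP; rewrite cards_eq0; apply/eqP/setP => i; rewrite !inE mxE eqxx. Qed.

End Wt.
Lemma wt_synR (R : realType) n m (H : 'M['F_2]_(m, n)) (y : vec n) :
  (wt (y *m H^T))%:R = \sum_(i < m) (1 - sR R (dotF2 (row i H) y)) / 2%:R :> R.
Proof.
rewrite /wt -sum1_card natr_sum big_mkcond /=.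
apply: eq_bigr => i _; rewrite sR_01 inE syn_dot.
by case: (_ != 0).
Qed.

Lemma bigmin_leq (I : finType) (P : pred I) (F : I -> nat) x0 j :
  P j -> (\big[minn/x0]_(i | P i) F i <= F j)%N.
Proof. by move=> Pj; rewrite -minEnat; exact: (bigmin_le_cond x0 F Pj). Qed.
Lemma bigmin_geq (I : finType) (P : pred I) (F : I -> nat) x0 m :
  (m <= x0)%N -> (forall i, P i -> m <= F i)%N -> (m <= \big[minn/x0]_(i | P i) F i)%N.
Proof.
move=> H1 H2; elim/big_ind: _ => //.
  by move=> u v Hu Hv; rewrite leq_min Hu Hv.
Qed.
Lemma bigmin_ex (I : finType) (P : pred I) (F : I -> nat) x0 j :
  P j -> (forall i, P i -> F i <= x0)%N ->
  exists2 i, P i & \big[minn/x0]_(i | P i) F i = F i.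
Proof.
move=> Pj Hx; case: (arg_minnP F Pj) => i Pi Hi.
exists i => //; apply/eqP; rewrite eqn_leq bigmin_leq //=.
by apply: bigmin_geq => //; apply: Hx.
Qed.

Section Cwt.
Variable n : nat.
Variable C : {set vec n}.
Hypothesis C0 : 0 \in C.
Hypothesis CD : forall a b, a \in C -> b \in C -> a + b \in C.
Lemma cwt_le y c : c \in C -> (cwt C y <= wt (y + c))%N.
Proof. exact: bigmin_leq. Qed.
Lemma cwt_ex y : exists2 c, c \in C & cwt C y = wt (y + c).
Proof. by rewrite /cwt; apply: (bigmin_ex (j := 0)) => // i _; apply: wt_le_n. Qed.
Lemma cwt_wt y : (cwt C y <= wt y)%N.
Proof. by have := cwt_le y C0; rewrite addr0. Qed.
Lemma cwt_tri a b : (cwt C (a + b) <= cwt C a + cwt C b)%N.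
Proof.
case: (cwt_ex a) => ca Ca ->; case: (cwt_ex b) => cb Cb ->.
apply: leq_trans (cwt_le (a + b) (CD Ca Cb)) _.
have -> : a + b + (ca + cb) = (a + ca) + (b + cb).
  by rewrite addrACA.
exact: wtD.
Qed.
End Cwt.

Lemma dual0 n (C : {set vec n}) : 0 \in dual C.
Proof. by rewrite inE; apply/forall_inP => c _; rewrite dot0l. Qed.
Lemma dualD n (C : {set vec n}) a b : a \in dual C -> b \in dual C -> a + b \in dual C.
Proof.
rewrite !inE => /forall_inP Ha /forall_inP Hb; apply/forall_inP => c Hc.
by rewrite dotDl (eqP (Ha _ Hc)) (eqP (Hb _ Hc)) addr0.
Qed.
Lemma dualP n (C : {set vec n}) a c : a \in dual C -> c \in C -> dotF2 a c = 0.
Proof. by rewrite inE => /forall_inP H Hc; apply/eqP/H. Qed.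
Lemma kerP m n (H : 'M['F_2]_(m, n)) y : (y \in kerC H) = (y *m H^T == 0).
Proof. by rewrite inE. Qed.
Lemma kerD m n (H : 'M['F_2]_(m, n)) a b : a \in kerC H -> b \in kerC H -> a + b \in kerC H.
Proof. by rewrite !kerP mulmxDl => /eqP -> /eqP ->; rewrite addr0. Qed.

Section Re.
Variable R : realType.
Lemma Re_sum (I : finType) (P : pred I) (F : I -> R[i]) :
  complex.Re (\sum_(i | P i) F i) = \sum_(i | P i) complex.Re (F i).
Proof. by apply: (big_rec2 (fun a b => complex.Re a = b)) => // i y1 y2 _ <-; case: (F i) y1 => a b [c d]. Qed.
Lemma Re_mulC (r : R) (z : R[i]) : complex.Re ((r%:C)%C * z) = r * complex.Re z.
Proof. by case: z => a b /=; rewrite mul0r subr0. Qed.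
Lemma Re_mulCr (r : R) (z : R[i]) : complex.Re (z * (r%:C)%C) = complex.Re z * r.
Proof. by rewrite mulrC Re_mulC mulrC. Qed.
Lemma Re_C (r : R) : complex.Re ((r%:C)%C) = r. Proof. by []. Qed.
Lemma conjC_real (r : R) : ((r%:C)%C : R[i])^* = (r%:C)%C.
Proof. by apply: conj_Creal; rewrite complex_real. Qed.
Lemma conj_real_mul (a : R) (r : R[i]) :
  r \is Num.real -> (((a%:C)%C * r^-1)^* : R[i]) = (a%:C)%C * r^-1.
Proof. by move=> Hr; apply: conj_Creal; rewrite rpredM ?rpredV //; apply/complex_realP; exists a. Qed.
Lemma ge0_Re (z : R[i]) : 0 <= z -> 0 <= complex.Re z.
Proof. by rewrite lecE => /andP []. Qed.
Lemma ge0_realE (z : R[i]) : 0 <= z -> z = ((complex.Re z)%:C)%C.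
Proof. by move=> H; rewrite RRe_real // ger0_real. Qed.
Lemma le_Re (z w : R[i]) : z <= w -> complex.Re z <= complex.Re w.
Proof. by rewrite lecE => /andP []. Qed.
End Re.

Section State.
Variables (R : realType) (n : nat) (rho : op R n).
Hypothesis Hs : is_state rho.
Definition rr (x x' : vec n) := complex.Re (rho x x').
Local Notation N := ((2 ^ n)%:R : R).

Lemma quad_real (b : vec n -> R) : 0 <= \sum_x \sum_x' b x * b x' * rr x x'.
Proof.
have H := ge0_Re (Hs.1 (fun x => (b x)%:C%C)).
rewrite Re_sum in H; apply: (le_trans H); rewrite le_eqVlt; apply/orP; left; apply/eqP.
apply: eq_bigr => x _; rewrite Re_sum; apply: eq_bigr => x' _.
rewrite conjC_real /rr; case: (rho x x') => a c /=; ring.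
Qed.

Lemma trace1 : \sum_x rr x x = 1.
Proof. by rewrite /rr -Re_sum; have := Hs.2; rewrite /trop => ->. Qed.

Lemma collapse2 (T : pzRingType) (F : vec n -> vec n -> T) y :
  \sum_x \sum_x' (x == y)%:R * F x x' * (x' == y)%:R = F y y.
Proof.
rewrite (bigD1 y) //=.
rewrite [X in _ + X]big1; last first.
  by move=> x Hx; apply: big1 => x' _; rewrite (negbTE Hx) !mul0r.
rewrite addr0 (bigD1 y) //= [X in _ + X]big1; last first.
  by move=> x' Hx; rewrite (negbTE Hx) mulr0.
by rewrite eqxx addr0 mul1r mulr1.
Qed.

Lemma rr_ge0 y : 0 <= rr y y.
Proof.
have := quad_real (fun x => (x == y)%:R).
rewrite (eq_bigr (fun x => \sum_x' (x == y)%:R * rr x x' * (x' == y)%:R)) ?collapse2 //.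
by move=> x _; apply: eq_bigr => x' _; rewrite mulrAC.
Qed.

Lemma rho_ge0 y : 0 <= rho y y.
Proof.
have := Hs.1 (fun x => (x == y)%:R).
rewrite (eq_bigr (fun x => \sum_x' (x == y)%:R * rho x x' * (x' == y)%:R)).
  by rewrite collapse2.
by move=> x _; apply: eq_bigr => x' _; rewrite conjC_nat.
Qed.

Lemma DZ_eq y : DZ rho y = ((rr y y)%:C)%C.
Proof. exact: (ge0_realE (rho_ge0 y)). Qed.

Definition qr (s : vec n) : R :=
  N^-1 * \sum_x \sum_x' sR R (dotF2 x s) * sR R (dotF2 x' s) * rr x x'.

Lemma qr_ge0 s : 0 <= qr s.
Proof.
apply: mulr_ge0; first by rewrite invr_ge0 ler0n.
exact: (quad_real (fun x => sR R (dotF2 x s))).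
Qed.

Lemma xket_term s x x' :
  (xket R s x)^* * rho x x' * xket R s x' =
  ((sR R (dotF2 x s) * sR R (dotF2 x' s) / N)%:C)%C * rho x x'.
Proof.
rewrite /xket !signF2E.
set r := sqrtC _.
have r0 : 0 <= r by rewrite sqrtC_ge0 exprn_ge0 // ler0n.
have rR : r^* = r by apply: conj_Creal; apply: ger0_real.
have rr2 : r * r = ((N)%:C)%C by rewrite -expr2 sqrtCK natrX rmorphXn rmorph_nat.
have cj : forall a : 'F_2, (((sR R a)%:C)%C / r)^* = ((sR R a)%:C)%C / r.
  by move=> a; apply: conj_real_mul; apply: ger0_real.
rewrite cj.
have -> : ((sR R (dotF2 x s) * sR R (dotF2 x' s) / N)%:C)%C =
   ((sR R (dotF2 x s))%:C)%C * ((sR R (dotF2 x' s))%:C)%C / (r * r).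
  by rewrite rr2 !rmorphM fmorphV.
rewrite invfM; set A := ((sR R _)%:C)%C; set B := ((sR R _)%:C)%C.
ring.
Qed.

Lemma DX_Re s : complex.Re (DX rho s) = qr s.
Proof.
rewrite /DX /qr Re_sum mulr_sumr; apply: eq_bigr => x _.
rewrite Re_sum mulr_sumr; apply: eq_bigr => x' _.
by rewrite xket_term /rr; case: (rho x x') => u w /=; ring.
Qed.

Lemma DX_ge0 s : 0 <= DX rho s.
Proof. exact: Hs.1. Qed.

Lemma DX_eq s : DX rho s = ((qr s)%:C)%C.
Proof. by rewrite {1}(ge0_realE (DX_ge0 s)) DX_Re. Qed.
End State.

Lemma sum_delta (T : pzRingType) n (f : vec n -> T) a : \sum_x (x == a)%:R * f x = f a.
Proof.
rewrite (bigD1 a) //= big1 ?addr0 ?eqxx ?mul1r // => x /negbTE ->; by rewrite mul0r.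
Qed.
Lemma eq_char2 n (x x' h : vec n) : (x + x' + h == 0) = (x' == x + h).
Proof. by rewrite addrAC addr_eq0 vec_opp eq_sym. Qed.

Section Fourier.
Variables (R : realType) (n : nat) (rho : op R n).
Local Notation N := ((2 ^ n)%:R : R).
Local Notation rr := (rr rho).
Local Notation qr := (qr rho).

Lemma qr_fourier h : \sum_s qr s * sR R (dotF2 h s) = \sum_x rr x (x + h).
Proof.
transitivity (\sum_s \sum_x \sum_x' N^-1 * (rr x x' * sR R (dotF2 s (x + x' + h)))).
  apply: eq_bigr => s _; rewrite /qr -mulrA mulr_suml mulr_sumr; apply: eq_bigr => x _.
  rewrite mulr_suml mulr_sumr; apply: eq_bigr => x' _.
  rewrite !dotDr !sRD (dotC s x) (dotC s x') (dotC s h); ring.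
rewrite exchange_big /=; apply: eq_bigr => x _; rewrite exchange_big /=.
transitivity (\sum_x' (x' == x + h)%:R * rr x x'); last by rewrite sum_delta.
apply: eq_bigr => x' _; rewrite -mulr_sumr -mulr_sumr orth eq_char2.
have N0 : N != 0 by rewrite pnatr_eq0 expn_eq0.
by field.
Qed.

Lemma qr_sum : is_state rho -> \sum_s qr s = 1.
Proof.
move=> Hs; rewrite -(trace1 Hs).
have -> : \sum_x rr x x = \sum_x rr x (x + 0) by apply: eq_bigr => x _; rewrite addr0.
rewrite -qr_fourier; apply: eq_bigr => s _; by rewrite dot0l sR0 mulr1.
Qed.
End Fourier.

Lemma exch3 (T : nmodType) (I J K : finType) (F : I -> J -> K -> T) :
  \sum_i \sum_j \sum_k F i j k = \sum_k \sum_i \sum_j F i j k.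
Proof.
under eq_bigr do rewrite exchange_big /=. by rewrite exchange_big.
Qed.

Section Energy.
Variables (R : realType) (n mX mZ : nat) (HX : 'M['F_2]_(mX, n)) (HZ : 'M['F_2]_(mZ, n)).
Variable rho : op R n.
Hypothesis Hs : is_state rho.
Local Notation rr := (rr rho).
Local Notation qr := (qr rho).

Definition HXr (x y : vec n) : R :=
  mX%:R^-1 * \sum_(i < mX) (((x == y)%:R - (x == y + row i HX)%:R) / 2%:R).
Definition HZr (x y : vec n) : R :=
  mZ%:R^-1 * \sum_(i < mZ) (((x == y)%:R - (x == y)%:R * sR R (dotF2 (row i HZ) y)) / 2%:R).

Lemma HamX_eq x y : HamX R HX x y = ((HXr x y)%:C)%C.
Proof.
rewrite /HamX /HXr rmorphM fmorphV rmorph_nat rmorph_sum; congr (_ * _).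
apply: eq_bigr => i _; rewrite /idop /Xop rmorphM fmorphV rmorphB !rmorph_nat //.
Qed.
Lemma HamZ_eq x y : HamZ R HZ x y = ((HZr x y)%:C)%C.
Proof.
rewrite /HamZ /HZr rmorphM fmorphV rmorph_nat rmorph_sum; congr (_ * _).
apply: eq_bigr => i _; rewrite /idop /Zop rmorphM fmorphV rmorphB rmorphM !rmorph_nat signF2E //.
Qed.
Lemma ham_eq x y : code_ham R HX HZ x y = ((((HXr x y + HZr x y) / 2%:R))%:C)%C.
Proof. by rewrite /code_ham HamX_eq HamZ_eq -rmorphD -(rmorph_nat (real_complex R) 2) -fmorphV -rmorphM. Qed.

Lemma HZr_eq x y : HZr x y = (x == y)%:R * (mZ%:R^-1 * (wt (y *m HZ^T))%:R).
Proof.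
rewrite /HZr (wt_synR R) mulrCA; congr (_ * _); rewrite mulr_sumr; apply: eq_bigr => i _; ring.
Qed.

Lemma ZpartE : \sum_x \sum_y HZr x y * rr y x =
   mZ%:R^-1 * \sum_y (wt (y *m HZ^T))%:R * rr y y.
Proof.
rewrite mulr_sumr; apply: eq_bigr => x _.
under eq_bigr do rewrite HZr_eq eq_sym -mulrA.
by rewrite sum_delta mulrA.
Qed.

Lemma Xterm (h : vec n) :
  \sum_x \sum_y ((x == y)%:R - (x == y + h)%:R) / 2%:R * rr y x =
  \sum_s qr s * ((1 - sR R (dotF2 h s)) / 2%:R).
Proof.
have E1 : \sum_x \sum_y (x == y)%:R * rr y x = \sum_x rr x x.
  by apply: eq_bigr => x _; under eq_bigr do rewrite eq_sym; rewrite sum_delta.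
have E2 : \sum_x \sum_y (x == y + h)%:R * rr y x = \sum_y rr y (y + h).
  by rewrite exchange_big /=; apply: eq_bigr => y _; rewrite sum_delta.
have E3 : \sum_x \sum_y ((x == y)%:R - (x == y + h)%:R) / 2%:R * rr y x =
   (\sum_x \sum_y (x == y)%:R * rr y x - \sum_x \sum_y (x == y + h)%:R * rr y x) / 2%:R.
  rewrite -sumrB mulr_suml; apply: eq_bigr => x _; rewrite -sumrB mulr_suml.
  by apply: eq_bigr => y _; ring.
rewrite E3 E1 E2 (trace1 Hs) -qr_fourier.
transitivity ((\sum_s qr s - \sum_s qr s * sR R (dotF2 h s)) / 2%:R).
  by rewrite (qr_sum Hs).
rewrite -sumrB mulr_suml; by apply: eq_bigr => s _; ring.
Qed.

Lemma XpartE : \sum_x \sum_y HXr x y * rr y x =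
   mX%:R^-1 * \sum_s (wt (s *m HX^T))%:R * qr s.
Proof.
transitivity (\sum_x \sum_y \sum_(i < mX)
    mX%:R^-1 * (((x == y)%:R - (x == y + row i HX)%:R) / 2%:R * rr y x)).
  apply: eq_bigr => x _; apply: eq_bigr => y _.
  by rewrite /HXr -mulrA mulr_suml mulr_sumr.
rewrite exch3.
transitivity (\sum_(i < mX) mX%:R^-1 * \sum_s qr s * ((1 - sR R (dotF2 (row i HX) s)) / 2%:R)).
  apply: eq_bigr => i _; rewrite -Xterm mulr_sumr; apply: eq_bigr => x _.
  by rewrite mulr_sumr.
rewrite -mulr_sumr exchange_big /=; congr (_ * _); apply: eq_bigr => s _.
by rewrite -mulr_sumr (wt_synR R) mulrC.
Qed.

Lemma energy_eq : complex.Re (trop (mulop (code_ham R HX HZ) rho)) =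
  (mX%:R^-1 * \sum_s (wt (s *m HX^T))%:R * qr s +
   mZ%:R^-1 * \sum_y (wt (y *m HZ^T))%:R * rr y y) / 2%:R.
Proof.
rewrite /trop Re_sum.
transitivity (\sum_x \sum_y (HXr x y * rr y x + HZr x y * rr y x) / 2%:R).
  apply: eq_bigr => x _; rewrite /mulop Re_sum; apply: eq_bigr => y _.
  by rewrite ham_eq /rr; case: (rho y x) => u w /=; ring.
rewrite -XpartE -ZpartE -big_split mulr_suml /=; apply: eq_bigr => x _.
by rewrite -big_split mulr_suml.
Qed.
End Energy.

Section SumSet.
Variables (R : realType) (T : finType) (P : T -> R).
Hypothesis P0 : forall y, 0 <= P y.
Lemma sum_sub (A B : {set T}) : A \subset B -> \sum_(y in A) P y <= \sum_(y in B) P y.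
Proof.
move/subsetP=> H; rewrite [X in X <= _]big_mkcond [X in _ <= X]big_mkcond /=.
apply: ler_sum => y _; case: ifP => Hy; first by rewrite (H _ Hy).
by case: ifP.
Qed.
Lemma sum_union (A B : {set T}) : \sum_(y in A :|: B) P y <= \sum_(y in A) P y + \sum_(y in B) P y.
Proof.
rewrite !(big_mkcond (fun y => y \in _)) -big_split /=; apply: ler_sum => y _.
rewrite in_setU; case: (y \in A); case: (y \in B) => //=; rewrite ?addr0 ?add0r //.
by rewrite lerDl.
Qed.
Lemma sum_diff (A B : {set T}) : B \subset A ->
  \sum_(y in A) P y = \sum_(y in B) P y + \sum_(y in A :\: B) P y.
Proof.
move=> HB; rewrite (big_setID B) /=; congr (_ + _).
by apply: eq_bigl => y; rewrite in_setI andbC; case: (boolP (y \in B)) => //= Hy; exact: (subsetP HB _ Hy).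
Qed.
End SumSet.

Lemma bigmin_le_x0 (I : finType) (P : pred I) (F : I -> nat) x0 :
  (\big[minn/x0]_(i | P i) F i <= x0)%N.
Proof. by apply: (big_rec (fun v => v <= x0)%N) => // i v _ Hv; rewrite geq_min Hv orbT. Qed.

Lemma dis_ge (R : realType) n (S0 S1 : {set vec n}) (t : R) a0 b0 :
  a0 \in S0 -> b0 \in S1 ->
  (forall a b, a \in S0 -> b \in S1 -> t <= (wt (a - b))%:R) -> t <= (dis S0 S1)%:R.
Proof.
move=> Ha Hb H; rewrite /dis.
case: (@bigmin_ex _ (fun s => s \in S0) (fun s => \big[minn/n]_(t in S1) wt (s - t)) n a0 Ha).
  by move=> i _; apply: bigmin_le_x0.
move=> s Hs ->.
case: (@bigmin_ex _ (fun t => t \in S1) (fun t => wt (s - t)) n b0 Hb).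
  by move=> i _; apply: wt_le_n.
by move=> u Hu ->; apply: H.
Qed.

Section Cluster.
Variables (R : realType) (n m1 : nat) (H1 : 'M['F_2]_(m1, n)) (C : {set vec n}).
Hypothesis C0 : 0 \in C.
Hypothesis CD : forall a b, a \in C -> b \in C -> a + b \in C.
Variables (P : vec n -> R) (c1 c2 e : R).
Hypothesis P0 : forall y, 0 <= P y.
Hypothesis c1_ge0 : 0 <= c1.
Hypothesis e_ge0 : 0 <= e.
Local Notation r := (c1 * (2%:R * e) * n%:R).
Hypothesis Hsep : 2%:R * r < c2 * n%:R.
Hypothesis Hcl : forall y, y \in Geps H1 (2%:R * e) ->
  (cwt C y)%:R <= r \/ c2 * n%:R <= (cwt C y)%:R.
Local Notation G := (Geps H1 e).

Lemma r_ge0 : 0 <= r.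
Proof. by rewrite !mulr_ge0 // ler0n. Qed.

Lemma G2 a b : a \in G -> b \in G -> a + b \in Geps H1 (2%:R * e).
Proof.
rewrite !inE => Ha Hb; rewrite synD.
apply: (le_trans (y := (wt (a *m H1^T) + wt (b *m H1^T))%:R)); first by rewrite ler_nat wtD.
have -> : 2%:R * e * m1%:R = e * m1%:R + e * m1%:R by ring.
by rewrite natrD; apply: lerD.
Qed.

Lemma clG a b : a \in G -> b \in G ->
  (cwt C (a + b))%:R <= r \/ c2 * n%:R <= (cwt C (a + b))%:R.
Proof. by move=> Ha Hb; apply: Hcl; apply: G2. Qed.

Definition Nb (y : vec n) : {set vec n} := [set y' in G | (cwt C (y + y'))%:R <= r].

Lemma NbP y a : (a \in Nb y) = (a \in G) && ((cwt C (y + a))%:R <= r).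
Proof. by rewrite /Nb inE. Qed.

Lemma Nb_sub y : Nb y \subset G.
Proof. by apply/subsetP => a; rewrite NbP => /andP []. Qed.

Lemma Nb_self y : y \in G -> y \in Nb y.
Proof.
move=> Hy; rewrite NbP Hy /= vec_addK.
have -> : cwt C 0 = 0%N by apply/eqP; rewrite -leqn0; apply: leq_trans (cwt_wt C0 0) _; rewrite wt0.
exact: r_ge0.
Qed.

Lemma cwt_swap a b c : (cwt C (a + b) <= cwt C (a + c) + cwt C (c + b))%N.
Proof.
have -> : a + b = (a + c) + (c + b) by rewrite addrA -(addrA a) vec_addK addr0.
exact: cwt_tri.
Qed.

Lemma Nb_close y a b : y \in G -> a \in Nb y -> b \in Nb y -> (cwt C (a + b))%:R <= r.
Proof.
move=> Hy; rewrite !NbP => /andP [Ha Hya] /andP [Hb Hyb].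
case: (clG Ha Hb) => // H.
have : (cwt C (a + b))%:R <= 2%:R * r :> R.
  apply: (le_trans (y := (cwt C (a + y) + cwt C (y + b))%:R)); first by rewrite ler_nat cwt_swap.
  have -> : 2%:R * r = r + r by ring.
  by rewrite natrD (addrC a); apply: lerD.
by move=> Hle; have := lt_le_trans Hsep H; rewrite ltNge Hle.
Qed.

Lemma Nb_far y a b : y \in G -> a \in Nb y -> b \in G -> b \notin Nb y ->
  c2 * n%:R <= (wt (a - b))%:R.
Proof.
move=> Hy; rewrite NbP => /andP [Ha Hya] Hb; rewrite NbP Hb /= -ltNge => Hyb.
have Hf : c2 * n%:R <= (cwt C (y + b))%:R.
  by case: (clG Hy Hb) => // H; move: Hyb; rewrite ltNge H.
have Hrr : r + r < c2 * n%:R by have -> : r + r = 2%:R * r by ring.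
have Hab : c2 * n%:R <= (cwt C (a + b))%:R.
  have T : (cwt C (y + b))%:R <= (cwt C (y + a))%:R + (cwt C (a + b))%:R :> R.
    by rewrite -natrD ler_nat; apply: cwt_swap.
  case: (clG Ha Hb) => // H.
  have := lt_le_trans (le_lt_trans (le_trans T (lerD Hya H)) Hrr) Hf.
  by rewrite ltxx.
apply: le_trans Hab _; rewrite ler_nat vec_sub; exact: cwt_wt.
Qed.

Definition U (l : seq (vec n)) : {set vec n} := foldr (fun g A => Nb g :|: A) set0 l.

Lemma U_in l a : a \in U l -> exists2 g, g \in l & a \in Nb g.
Proof.
elim: l => [|g l IH] /=; first by rewrite inE.
rewrite in_setU => /orP [H|/IH [g' Hg' Ha]]; first by exists g; rewrite ?mem_head.
by exists g'; rewrite // in_cons Hg' orbT.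
Qed.

Lemma U_sub l : U l \subset G.
Proof.
elim: l => [|g l IH] /=; first by apply/subsetP => a; rewrite inE.
by rewrite subUset Nb_sub.
Qed.

Lemma U_sup l g : g \in l -> Nb g \subset U l.
Proof.
elim: l => [|g' l IH] //=; rewrite in_cons => /orP [/eqP ->|H]; first exact: subsetUl.
by apply: subset_trans (IH H) (subsetUr _ _).
Qed.

Lemma greedy l : (forall g, g \in l -> g \in G) ->
  (forall g, g \in G -> \sum_(y in Nb g) P y < 50%:R^-1) ->
  50%:R^-1 <= \sum_(y in U l) P y ->
  exists l', [/\ (forall g, g \in l' -> g \in G), 50%:R^-1 <= \sum_(y in U l') P y &
     \sum_(y in U l') P y < 2%:R / 50%:R].
Proof.
move=> + Hsmall; elim: l => [|g l IH] Hl HU /=.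
  by move: HU; rewrite /= big_set0; lra.
have [Hb|Hs] := lerP (50%:R^-1) (\sum_(y in U l) P y).
  by apply: IH => // g' Hg'; apply: Hl; rewrite in_cons Hg' orbT.
exists (g :: l); split => //.
have Hg : g \in G by apply: Hl; rewrite mem_head.
have := sum_union P0 (Nb g) (U l); have := Hsmall g Hg; rewrite /=; lra.
Qed.

Lemma cluster_mainX : True. Proof. by []. Qed.
Lemma cluster_main :
  49%:R / 50%:R <= \sum_(y in G) P y ->
  ~ spread (fun y => ((P y)%:C)%C) (50%:R^-1) c2 ->
  exists K : {set vec n}, [/\ K \subset G, 24%:R / 25%:R < \sum_(y in K) P y &
     forall a b, a \in K -> b \in K -> (cwt C (a + b))%:R <= r].
Proof.
move=> HG Hns.
have probE : forall S, prob (fun y => ((P y)%:C)%C) S = ((\sum_(y in S) P y)%:C)%C.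
  by move=> S; rewrite /prob rmorph_sum.
have spreadI : forall S0 S1 : {set vec n}, 50%:R^-1 <= \sum_(y in S0) P y ->
    50%:R^-1 <= \sum_(y in S1) P y ->
    (forall a b, a \in S0 -> b \in S1 -> c2 * n%:R <= (wt (a - b))%:R) -> False.
  move=> S0 S1 Hq0 Hq1 Hd; apply: Hns; exists S0, S1; rewrite !probE !lecR; split => //; split => //.
  case: (set_0Vmem S0) => [E|[a0 Ha0]]; first by move: Hq0; rewrite E big_set0; lra.
  case: (set_0Vmem S1) => [E|[b0 Hb0]]; first by move: Hq1; rewrite E big_set0; lra.
  exact: (dis_ge Ha0 Hb0 Hd).
have [y Hy Hbig] : exists2 y, y \in G & 50%:R^-1 <= \sum_(z in Nb y) P z.
  case: (boolP [exists y in G, 50%:R^-1 <= \sum_(y' in Nb y) P y']).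
    by case/existsP => y' /andP [Hy' H']; exists y'.
  move/exists_inPn => Hsm; exfalso.
  have Hsmall : forall g, g \in G -> \sum_(y in Nb g) P y < 50%:R^-1.
    by move=> g Hg; rewrite ltNge; apply: Hsm.
  have HU : 50%:R^-1 <= \sum_(y in U (enum G)) P y.
    have : G \subset U (enum G).
      apply/subsetP => g Hg; apply: (subsetP (U_sup (l := enum G) (g := g) _)).
        by rewrite mem_enum.
      exact: Nb_self.
    move/(sum_sub P0); move: HG; lra.
  case: (greedy (l := enum G) _ Hsmall HU) => [g|l' [Hl' Hq0 Hq1]]; first by rewrite mem_enum.
  apply: (spreadI (U l') (G :\: U l')) => //.
    have := sum_diff P (U_sub l'); move: HG Hq1; lra.
  move=> a b Ha; rewrite in_setD => /andP [Hb1 Hb2].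
  case: (U_in Ha) => g Hg Hag.
  apply: (Nb_far (Hl' _ Hg) Hag Hb2).
  by apply: contra Hb1; apply: (subsetP (U_sup Hg)).
have HS1 : \sum_(z in G :\: Nb y) P z < 50%:R^-1.
  rewrite ltNge; apply/negP => H; apply: (spreadI (Nb y) (G :\: Nb y)) => //.
  move=> a b Ha; rewrite in_setD => /andP [Hb1 Hb2].
  exact: (Nb_far Hy Ha Hb2 Hb1).
exists (Nb y); split; first exact: Nb_sub.
  have := sum_diff P (Nb_sub y); move: HG HS1; lra.
by move=> a b Ha Hb; apply: (Nb_close Hy Ha Hb).
Qed.
End Cluster.

Lemma sum_eq_opp0 (R : realType) (S : R) : S = - S -> S = 0.
Proof. move=> H; have : S + S = 0 by rewrite {2}H subrr. lra. Qed.

Lemma eq_char2b n (s t : vec n) : (s + t == 0) = (t == s).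
Proof. by rewrite addr_eq0 vec_opp. Qed.

Section Uncert.
Variables (R : realType) (n : nat) (rho : op R n).
Hypothesis Hs : is_state rho.
Variables (zeta xi : vec n -> 'F_2).
Local Notation N := ((2 ^ n)%:R : R).
Local Notation rr := (rr rho).
Local Notation qr := (qr rho).
Local Notation sg := (sR R).

Definition Xr (x y : vec n) : R := N^-1 * \sum_s sg (xi s) * sg (dotF2 s (x + y)).

Lemma N0 : N != 0. Proof. by rewrite pnatr_eq0 expn_eq0. Qed.

Lemma Xr_sym x y : Xr x y = Xr y x.
Proof. by rewrite /Xr addrC. Qed.

Lemma Xr_sq y y' : \sum_x Xr x y * Xr x y' = (y == y')%:R.
Proof.
transitivity (\sum_x \sum_s \sum_t N^-1 * N^-1 * (sg (xi s) * sg (xi t) *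
   sg (dotF2 s y) * sg (dotF2 t y') * sg (dotF2 x (s + t)))).
  apply: eq_bigr => x _; rewrite /Xr mulrACA mulr_suml mulr_sumr; apply: eq_bigr => s _.
  rewrite mulr_sumr mulr_sumr; apply: eq_bigr => t _.
  rewrite !dotDr !sRD (dotC x s) (dotC x t); ring.
rewrite -exch3.
transitivity (\sum_s \sum_t N^-1 * N^-1 * (sg (xi s) * sg (xi t) *
   sg (dotF2 s y) * sg (dotF2 t y') * ((t == s)%:R * N))).
  apply: eq_bigr => s _; apply: eq_bigr => t _.
  rewrite -(eq_char2b s t) -(orth R (s + t)) mulr_sumr mulr_sumr; apply: eq_bigr => x _.
  by rewrite (dotC x).
transitivity (\sum_s N^-1 * sg (dotF2 s (y + y'))).
  apply: eq_bigr => s _.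
  rewrite (eq_bigr (fun t => (t == s)%:R * (N^-1 * N^-1 * (sg (xi s) * sg (xi t) *
     sg (dotF2 s y) * sg (dotF2 t y') * N)))); last by move=> t _; ring.
  rewrite sum_delta dotDr sRD.
  rewrite sR_sq mul1r; move: N0; move: (N) => M HM; by field.
rewrite -mulr_sumr orth eq_char2b eq_sym.
by move: N0; move: (N) => M HM; field.
Qed.

Hypothesis Hanti : forall x y, Xr x y != 0 -> sg (zeta x) = - sg (zeta y).

Lemma anti x y : sg (zeta x) * Xr x y + Xr x y * sg (zeta y) = 0.
Proof.
have [->|/Hanti ->] := eqVneq (Xr x y) 0; first by rewrite mulr0 mul0r addr0.
ring.
Qed.

Definition Bm (x y : vec n) : R := (3%:R / 2%:R - sg (zeta x)) * (x == y)%:R - Xr x y.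

Lemma M_eq y y' : \sum_x Bm x y * Bm x y' =
   ((17%:R / 4%:R) - 3%:R * sg (zeta y)) * (y == y')%:R - 3%:R * Xr y y'.
Proof.
pose c := fun x => 3%:R / 2%:R - sg (zeta x).
have E : forall x, Bm x y * Bm x y' =
   (x == y)%:R * (c x * c x * (x == y')%:R) - (x == y)%:R * (c x * Xr x y')
   - (x == y')%:R * (c x * Xr x y) + Xr x y * Xr x y'.
  by move=> x; rewrite /Bm -/(c x); ring.
transitivity (\sum_x (x == y)%:R * (c x * c x * (x == y')%:R) - \sum_x (x == y)%:R * (c x * Xr x y')
   - \sum_x (x == y')%:R * (c x * Xr x y) + \sum_x Xr x y * Xr x y').
  by rewrite -!sumrB -big_split /=; apply: eq_bigr => x _; rewrite E.
rewrite !sum_delta Xr_sq (Xr_sym y' y).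
have A := anti y y'.
apply/eqP; rewrite -subr_eq0; apply/eqP.
transitivity ((sg (zeta y) * sg (zeta y) - 1) * (y == y')%:R +
   (sg (zeta y) * Xr y y' + Xr y y' * sg (zeta y'))).
  by rewrite /c /=; move: ((y == y')%:R : R) (Xr y y') (sg (zeta y)) (sg (zeta y')) => e X a b; field.
by rewrite sR_sq A subrr mul0r addr0.
Qed.

Lemma Xqr : \sum_s sg (xi s) * qr s = \sum_y \sum_y' Xr y y' * rr y y'.
Proof.
transitivity (\sum_s \sum_y \sum_y' N^-1 * (sg (xi s) * sg (dotF2 s (y + y')) * rr y y')).
  apply: eq_bigr => s _; rewrite /qr mulrCA !mulr_sumr; apply: eq_bigr => y _.
  rewrite !mulr_sumr; apply: eq_bigr => y' _.
  rewrite dotDr sRD (dotC s y) (dotC s y'); ring.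
rewrite exchange_big /=; apply: eq_bigr => y _; rewrite exchange_big /=; apply: eq_bigr => y' _.
by rewrite /Xr -mulrA mulr_suml mulr_sumr; apply: eq_bigr => s _; ring.
Qed.

Lemma uncert : \sum_y sg (zeta y) * rr y y + \sum_s sg (xi s) * qr s <= 17%:R / 12%:R.
Proof.
have H0 : 0 <= \sum_x \sum_y \sum_y' Bm x y * Bm x y' * rr y y'.
  by apply: sumr_ge0 => x _; apply: (quad_real Hs (Bm x)).
have E : \sum_x \sum_y \sum_y' Bm x y * Bm x y' * rr y y' =
   17%:R / 4%:R * \sum_y rr y y - 3%:R * \sum_y sg (zeta y) * rr y y
   - 3%:R * \sum_y \sum_y' Xr y y' * rr y y'.
  rewrite exchange_big /=.
  transitivity (\sum_y \sum_y' (((17%:R / 4%:R) - 3%:R * sg (zeta y)) * (y == y')%:R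
       - 3%:R * Xr y y') * rr y y').
    apply: eq_bigr => y _; rewrite exchange_big /=; apply: eq_bigr => y' _.
    by rewrite -M_eq mulr_suml.
  rewrite !mulr_sumr -!sumrB; apply: eq_bigr => y _.
  transitivity (\sum_y' ((y' == y)%:R * ((17%:R / 4%:R - 3%:R * sg (zeta y)) * rr y y'))
     - \sum_y' 3%:R * (Xr y y' * rr y y')).
    rewrite -sumrB; apply: eq_bigr => y' _; rewrite (eq_sym y' y); ring.
  rewrite sum_delta mulr_sumr; congr (_ - _); ring.
rewrite E (trace1 Hs) -Xqr in H0.
lra.
Qed.
End Uncert.

Lemma dim_mono n (A B : {set vec n}) : A \subset B -> (dimF2 A <= dimF2 B)%N.
Proof.
move=> HAB; rewrite /dimF2; apply: mxrankS; apply/row_subP => i.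
rewrite rowK.
set x := nth 0 (enum A) i.
have HxA : x \in A by rewrite -mem_enum; apply: mem_nth; rewrite -cardE.
have HxB : x \in enum B by rewrite mem_enum; apply: (subsetP HAB).
have Hj : (index x (enum B) < #|B|)%N by rewrite cardE index_mem.
have -> : x = nth 0 (enum B) (Ordinal Hj) by rewrite /= nth_index.
by rewrite -(rowK (fun j : 'I_#|B| => nth 0 (enum B) j)); apply: row_sub.
Qed.

Section Code.
Variables (n mX mZ : nat) (HX : 'M['F_2]_(mX, n)) (HZ : 'M['F_2]_(mZ, n)).
Hypothesis Hcss : css_cond HX HZ.

Lemma dualX_sub : dual (kerC HX) \subset kerC HZ. Proof. exact: Hcss. Qed.

Lemma rowX_dual i : row i HX \in dual (kerC HX).
Proof. by rewrite inE; apply/forall_inP => c; rewrite kerP => /eqP Hc; rewrite -syn_dot Hc mxE. Qed.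

Lemma dualZ_sub : dual (kerC HZ) \subset kerC HX.
Proof.
apply/subsetP => t Ht; rewrite kerP; apply/eqP/matrixP => i j; rewrite ord1 [RHS]mxE syn_dot.
by rewrite dotC (dualP Ht) // (subsetP Hcss) // rowX_dual.
Qed.

Lemma logical_pair : (0 < css_k HX HZ)%N ->
  exists u v, [/\ u \in kerC HX, v \in kerC HZ & dotF2 u v = 1].
Proof.
move=> Hk.
have [v Hv Hnv] : exists2 v, v \in kerC HZ & v \notin dual (kerC HX).
  case: (boolP (kerC HZ \subset dual (kerC HX))) => [Hsub|].
    by move: Hk; rewrite /css_k subn_gt0 ltnNge (dim_mono Hsub).
  by case/subsetPn => v Hv Hnv; exists v.
move: Hnv; rewrite inE => /forall_inPn [u Hu Huv].
exists u, v; split => //; rewrite dotC.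
by case: (F2_cases (dotF2 v u)) Huv => ->.
Qed.
End Code.

Lemma cwt_logical n (Cl Dl : {set vec n}) (d : nat) :
  0 \in Dl -> (forall a b, a \in Dl -> b \in Dl -> a + b \in Dl) ->
  Dl \subset Cl -> (forall a b, a \in Cl -> b \in Cl -> a + b \in Cl) ->
  (forall c, c \in Cl -> c \notin Dl -> (d <= wt c)%N) ->
  forall c, c \in Cl -> c \notin Dl -> (d <= cwt Dl c)%N.
Proof.
move=> D0 DD DC CD Hd c Hc Hnc.
case: (cwt_ex D0 c) => t Ht ->; apply: Hd; first by apply: CD => //; apply: (subsetP DC).
apply: contra Hnc => H; have -> : c = (c + t) + t by rewrite -addrA vec_addK addr0.
exact: DD.
Qed.

Lemma close_dual (R : realType) n (Cl Dl : {set vec n}) (d : nat) (r : R) :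
  0 \in Dl -> (forall a b, a \in Dl -> b \in Dl -> a + b \in Dl) ->
  Dl \subset Cl -> (forall a b, a \in Cl -> b \in Cl -> a + b \in Cl) ->
  (forall c, c \in Cl -> c \notin Dl -> (d <= wt c)%N) ->
  r < d%:R -> forall c, c \in Cl -> (cwt Dl c)%:R <= r -> c \in Dl.
Proof.
move=> D0 DD DC CD Hd Hr c Hc Hcr; apply/negPn/negP => Hnc.
have := cwt_logical D0 DD DC CD Hd Hc Hnc; rewrite -(ler_nat R) => H.
by have := lt_le_trans (le_lt_trans Hcr Hr) H; rewrite ltxx.
Qed.

Lemma dZ n mX mZ (HX : 'M['F_2]_(mX, n)) (HZ : 'M['F_2]_(mZ, n)) c :
  c \in kerC HZ -> c \notin dual (kerC HX) -> (css_d HX HZ <= wt c)%N.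
Proof. by move=> H1 H2; apply: bigmin_leq; rewrite in_setU in_setD H1 H2. Qed.
Lemma dX n mX mZ (HX : 'M['F_2]_(mX, n)) (HZ : 'M['F_2]_(mZ, n)) c :
  c \in kerC HX -> c \notin dual (kerC HZ) -> (css_d HX HZ <= wt c)%N.
Proof. by move=> H1 H2; apply: bigmin_leq; rewrite in_setU !in_setD H1 H2 orbT. Qed.

Lemma markov (R : realType) n m (H : 'M['F_2]_(m, n)) (P : vec n -> R) (e1 : R) :
  (forall y, 0 <= P y) -> \sum_y P y = 1 -> 0 < e1 ->
  m%:R^-1 * \sum_y (wt (y *m H^T))%:R * P y <= 2%:R * e1 ->
  49%:R / 50%:R <= \sum_(y in Geps H (100%:R * e1)) P y.
Proof.
move=> P0 P1 He1 HT.
have [m0|mpos] := eqVneq m 0%N.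
  subst m; rewrite (eq_bigl (fun _ => true)) ?P1; first lra.
  move=> y; rewrite inE; have := wt_le_n (y *m H^T); rewrite leqn0 => /eqP ->.
  by rewrite mulr0 lexx.
have mR : 0 < m%:R :> R by rewrite ltr0n lt0n.
set G := Geps H _.
have E : \sum_y P y = \sum_(y in G) P y + \sum_(y in ~: G) P y.
  rewrite (bigID (fun y => y \in G)) /=; congr (_ + _); apply: eq_bigl => y; by rewrite ?inE.
have Hc : \sum_(y in ~: G) P y * (100%:R * e1 * m%:R) <= \sum_y (wt (y *m H^T))%:R * P y.
  apply: le_trans (_ : \sum_(y in ~: G) (wt (y *m H^T))%:R * P y <= _).
    apply: ler_sum => y; rewrite !inE -ltNge => /ltW Hy.
    by rewrite mulrC; apply: ler_wpM2r.
  rewrite [X in _ <= X](bigID (fun y => y \in ~: G)) /= lerDl.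
  by apply: sumr_ge0 => y _; apply: mulr_ge0.
rewrite -mulr_suml in Hc.
have Hb : \sum_y (wt (y *m H^T))%:R * P y <= 2%:R * e1 * m%:R.
  by move: HT; rewrite -ler_pdivlMl ?invr_gt0 // invrK mulrC.
have := le_trans Hc Hb.
set S := \sum_(y in ~: G) P y => HS.
have HS' : S * 100%:R <= 2%:R.
  have hp : 0 < e1 * m%:R by apply: mulr_gt0.
  move: HS; rewrite (_ : S * (100%:R * e1 * m%:R) = (S * 100%:R) * (e1 * m%:R)); last by ring.
  rewrite (_ : 2%:R * e1 * m%:R = 2%:R * (e1 * m%:R)); last by ring.
  by rewrite ler_pM2r.
move: E; rewrite P1 -/S; clearbody S; move=> E; lra.
Qed.

Lemma Xr_vanish (R : realType) n (xi : vec n -> 'F_2) (v c x y : vec n) :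
  (forall s, xi (c + s) = xi s + dotF2 v c) -> dotF2 c (v + (x + y)) = 1 ->
  Xr R xi x y = 0.
Proof.
move=> Hxi Hc; rewrite /Xr.
suff -> : \sum_s sR R (xi s) * sR R (dotF2 s (x + y)) = 0 by rewrite mulr0.
apply: sum_eq_opp0.
rewrite {1}(reindex_inj (addrI c)) /= -sumrN; apply: eq_bigr => s _.
rewrite Hxi dotDl !sRD (dotC v c).
have : sR R (dotF2 c v) * sR R (dotF2 c (x + y)) = -1 by rewrite -sRD -dotDr Hc sR1.
move: (sR R (dotF2 c v)) (sR R (dotF2 c (x + y))) => a b Hab.
rewrite (_ : - (sR R (xi s) * sR R (dotF2 s (x + y))) =
  sR R (xi s) * sR R (dotF2 s (x + y)) * (a * b)); [ring | rewrite Hab; ring].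
Qed.

Lemma expect_lb (R : realType) n (P : vec n -> R) (K : {set vec n}) (b : vec n -> 'F_2) :
  (forall y, 0 <= P y) -> \sum_y P y = 1 -> (forall y, y \in K -> b y = 0) ->
  2%:R * \sum_(y in K) P y - 1 <= \sum_y sR R (b y) * P y.
Proof.
move=> P0 P1 Hb.
rewrite (bigID (fun y => y \in K)) /= in P1.
rewrite [X in _ <= X](bigID (fun y => y \in K)) /=.
have E1 : \sum_(y | y \in K) sR R (b y) * P y = \sum_(y in K) P y.
  by apply: eq_bigr => y Hy; rewrite Hb // sR0 mul1r.
have E2 : - \sum_(y | y \notin K) P y <= \sum_(y | y \notin K) sR R (b y) * P y.
  rewrite -sumrN; apply: ler_sum => y _.
  have := sR_bound R (b y); move/andP => [h1 _].
  by rewrite -mulN1r; apply: ler_wpM2r.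
move: P1; rewrite E1; lra.
Qed.

Lemma spread_eq (R : realType) n (D D' : vec n -> R[i]) mu delta :
  (forall y, D y = D' y) -> spread D mu delta -> spread D' mu delta.
Proof.
move=> H [S0 [S1 [H0 [H1 H2]]]]; exists S0, S1.
have E : forall S, prob D S = prob D' S by move=> S; apply: eq_bigr => y _.
by rewrite -!E.
Qed.

Unset Implicit Arguments.
Theorem theorem4p7 (R : realType) (n mX mZ : nat)
    (HX : 'M['F_2]_(mX, n)) (HZ : 'M['F_2]_(mZ, n))
    (c1 c2 e0 eps : R) (rho : op R n) :
  css_cond HX HZ ->
  (0 < css_k HX HZ)%N ->
  0 < c1 -> 0 < c2 -> 0 < e0 ->
  clustering HX HZ c1 c2 e0 ->
  eps < 1000%:R^-1 * Num.min (e0 / 2%:R)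
                      (Num.min (c2 / (4%:R * c1))
                               ((css_d HX HZ)%:R / (2%:R * c1 * n%:R))) ->
  is_state rho ->
  trop (mulop (code_ham R HX HZ) rho) <= (eps%:C)%C ->
  spread (DX rho) (50%:R^-1) c2 \/ spread (DZ rho) (50%:R^-1) c2.
Proof.
move=> Hcss Hk c1p c2p e0p Hcl Heps Hs Hen.
set d := css_d HX HZ in Heps.
have P0 := rr_ge0 Hs.
have Q0 := qr_ge0 Hs.
have P1 := trace1 Hs.
have Q1 := qr_sum Hs.
have HE := le_Re Hen; rewrite (energy_eq HX HZ Hs) /= in HE.
set TX := _ * \sum_s _ in HE.
set TZ := _ * \sum_y _ in HE.
have TX0 : 0 <= TX.
  by apply: mulr_ge0; [rewrite invr_ge0 ler0n | apply: sumr_ge0 => s _; apply: mulr_ge0].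
have TZ0 : 0 <= TZ.
  by apply: mulr_ge0; [rewrite invr_ge0 ler0n | apply: sumr_ge0 => s _; apply: mulr_ge0].
set m := Num.min _ _ in Heps.
have [Hm1 Hm2 Hm3] : [/\ m <= e0 / 2%:R, m <= c2 / (4%:R * c1) & m <= d%:R / (2%:R * c1 * n%:R)].
  have := lexx m; rewrite {1}/m !le_min => /andP [-> /andP [-> ->]]; by [].
have eps0 : 0 <= eps by lra.
pose e1 := (eps + 1000%:R^-1 * m) / 2%:R.
have e1p : 0 < e1 by rewrite /e1; lra.
have e1m : e1 < 1000%:R^-1 * m by rewrite /e1; lra.
have TZb : TZ <= 2%:R * e1 by rewrite /e1; lra.
have TXb : TX <= 2%:R * e1 by rewrite /e1; lra.
have mpos : 0 < m by lra.
have n0 : (0 < n)%N.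
  rewrite lt0n; apply/negP => /eqP n0; move: Hm3; rewrite n0 mulr0 invr0 mulr0; lra.
have nR : 0 < n%:R :> R by rewrite ltr0n.
have c1e1 : 0 < c1 * e1 by apply: mulr_gt0.
have h2e : 0 < 2%:R * (100%:R * e1) < e0 by apply/andP; split; lra.
have Hc2 : e1 * (4000%:R * c1) < c2.
  rewrite -ltr_pdivlMr; last by apply: mulr_gt0 => //; rewrite ltr0n.
  apply: (lt_le_trans e1m).
  rewrite (_ : c2 / (4000%:R * c1) = 1000%:R^-1 * (c2 / (4%:R * c1))); last first.
    by field; rewrite (gt_eqF c1p).
  by apply: ler_wpM2l => //; rewrite invr_ge0 ler0n.
have Hdd : e1 * (2000%:R * c1 * n%:R) < d%:R.
  rewrite -ltr_pdivlMr; last by apply: mulr_gt0 => //; apply: mulr_gt0 => //; rewrite ltr0n.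
  apply: (lt_le_trans e1m).
  rewrite (_ : d%:R / (2000%:R * c1 * n%:R) = 1000%:R^-1 * (d%:R / (2%:R * c1 * n%:R))); last first.
    by field; rewrite (gt_eqF c1p) (gt_eqF nR).
  by apply: ler_wpM2l => //; rewrite invr_ge0 ler0n.
have Hsep : 2%:R * (c1 * (2%:R * (100%:R * e1)) * n%:R) < c2 * n%:R.
  rewrite (_ : 2%:R * (c1 * (2%:R * (100%:R * e1)) * n%:R) = (400%:R * (c1 * e1)) * n%:R); last by ring.
  rewrite ltr_pM2r //.
  move: Hc2; rewrite (_ : e1 * (4000%:R * c1) = 4000%:R * (c1 * e1)); last by ring.
  lra.
have Hrd : c1 * (2%:R * (100%:R * e1)) * n%:R < d%:R.
  apply: le_lt_trans Hdd.
  rewrite (_ : c1 * (2%:R * (100%:R * e1)) * n%:R = 200%:R * (c1 * e1 * n%:R)); last by ring.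
  rewrite (_ : e1 * (2000%:R * c1 * n%:R) = 2000%:R * (c1 * e1 * n%:R)); last by ring.
  have : 0 < c1 * e1 * n%:R by apply: mulr_gt0.
  lra.
have e'0 : 0 <= 100%:R * e1 by lra.
have [HclX HclZ] := Hcl _ (andP h2e).1 (andP h2e).2.
have GZ := markov (H := HZ) (P := fun y => rr rho y y) P0 P1 e1p TZb.
have GX := markov (H := HX) (P := qr rho) Q0 Q1 e1p TXb.
case: (classic (spread (DX rho) (50%:R^-1) c2)) => [HX'|nX]; first by left.
case: (classic (spread (DZ rho) (50%:R^-1) c2)) => [HZ'|nZ]; first by right.
exfalso.
have nZ' : ~ spread (fun y => ((rr rho y y)%:C)%C) (50%:R^-1) c2.
  by move=> H; apply: nZ; apply: (spread_eq _ H) => y; rewrite DZ_eq.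
have nX' : ~ spread (fun y => ((qr rho y)%:C)%C) (50%:R^-1) c2.
  by move=> H; apply: nX; apply: (spread_eq _ H) => y; rewrite DX_eq.
have [KZ [KZsub KZbig KZclose]] := cluster_main (dual0 (kerC HX)) (@dualD _ _) P0
   (ltW c1p) e'0 Hsep HclZ GZ nZ'.
have [KX [KXsub KXbig KXclose]] := cluster_main (dual0 (kerC HZ)) (@dualD _ _) Q0
   (ltW c1p) e'0 Hsep HclX GX nX'.
have [u [v [Hu Hv Huv]]] := logical_pair Hk.
pose fZ (sg : 'rV['F_2]_mZ) := odflt 0 [pick y in KZ | y *m HZ^T == sg].
pose zeta y := dotF2 u (y + fZ (y *m HZ^T)).
pose fX (sg : 'rV['F_2]_mX) := odflt 0 [pick y in KX | y *m HX^T == sg].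
pose xi s := dotF2 v (s + fX (s *m HX^T)).
have zetaK : forall y, y \in KZ -> zeta y = 0.
  move=> y Hy; rewrite /zeta /fZ; case: pickP => [y' /andP [Hy' /eqP Hsyn]|H] /=; last first.
    by have := H y; rewrite Hy eqxx.
  have Hsum : y + y' \in kerC HZ by rewrite kerP synD Hsyn vec_addK.
  have Hd := close_dual (dual0 _) (@dualD _ _) (dualX_sub Hcss) (@kerD _ _ _) (@dZ _ _ _ HX HZ)
     Hrd Hsum (KZclose y y' Hy Hy').
  by rewrite dotC (dualP Hd Hu).
have xiK : forall y, y \in KX -> xi y = 0.
  move=> y Hy; rewrite /xi /fX; case: pickP => [y' /andP [Hy' /eqP Hsyn]|H] /=; last first.
    by have := H y; rewrite Hy eqxx.
  have Hsum : y + y' \in kerC HX by rewrite kerP synD Hsyn vec_addK.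
  have Hd := close_dual (dual0 _) (@dualD _ _) (dualZ_sub Hcss) (@kerD _ _ _) (@dX _ _ _ HX HZ)
     Hrd Hsum (KXclose y y' Hy Hy').
  by rewrite dotC (dualP Hd Hv).
have Hanti : forall x y, Xr R xi x y != 0 -> sR R (zeta x) = - sR R (zeta y).
  move=> x y HXr.
  have Hd : v + (x + y) \in dual (kerC HX).
    rewrite inE; apply/forall_inP => c Hc; apply/eqP.
    case: (F2_cases (dotF2 (v + (x + y)) c)) => // H1; exfalso; move/eqP: HXr; apply.
    apply: (@Xr_vanish R n xi v c x y); last by rewrite dotC.
    move=> s; rewrite /xi synD (eqP (etrans (esym (kerP HX c)) Hc)) add0r.
    by rewrite -addrA dotDr [dotF2 v c + _]addrC.
  have Hxy : x + y \in kerC HZ.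
    have -> : x + y = v + (v + (x + y)) by rewrite addrA vec_addK add0r.
    by apply: kerD => //; apply: (subsetP (dualX_sub Hcss)).
  have Hsyn : x *m HZ^T = y *m HZ^T.
    by move: Hxy; rewrite kerP synD addr_eq0 vec_opp => /eqP.
  have -> : zeta x = zeta y + 1.
    rewrite /zeta Hsyn.
    have -> : x + fZ (y *m HZ^T) = (y + fZ (y *m HZ^T)) + (v + (v + (x + y))).
      by rewrite [v + (v + _)]addrA vec_addK add0r (addrC x y) addrA (addrAC y _ y) vec_addK add0r addrC.
    by rewrite dotDr [dotF2 u (v + _)]dotDr Huv (dotC u (v + (x + y))) (dualP Hd Hu) addr0.
  by rewrite sRD sR1 mulrN1.
have EZ := expect_lb P0 P1 zetaK.
have EX := expect_lb Q0 Q1 xiK.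
have U := uncert Hs Hanti.
lra.
Qed.
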